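(* Let $L$ be a positive integer and $U>0$ with $L>\frac{8}{U}$, and let $N=2$. Consider the Lieb-Wu equations with one down spin in the unknowns $k_1,k_2$ and real $\Lambda$: $$e^{i k_j L} = \frac{\Lambda - \sin k_j - iU/4}{\Lambda - \sin k_j + iU/4},\quad j=1,2,\qquad \prod_{j=1}^2 \frac{\Lambda - \sin k_j - iU/4}{\Lambda - \sin k_j + iU/4} = 1.$$ Call a solution a $k$-$\Lambda$ two-string if $k_1 = q - i\xi$, $k_2 = q+i\xi$ with $q$ real (taken modulo $2\pi$, i.e. $q\in[0,2\pi)$) and $\xi>0$. Then such $k$-$\Lambda$ two-string solutions exist only if $\frac{\pi}{2} < q < \frac{3\pi}{2}$. The allowed values of $q$ in that range are quantized as $q = m\frac{\pi}{L}$ with $m$ an integer. For every $q = m\frac{\pi}{L}$ with $\frac{\pi}{2}<q<\frac{3\pi}{2}$ there is one and only one $k$-$\Lambda$ two-string. The total number of $k$-$\Lambda$ two-strings is $L$ if $L$ is odd and $L-1$ if $L$ is even.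
   Context: Here $k_1,k_2$ are complex numbers determined modulo $2\pi$; solutions are counted modulo permutation of $k_1,k_2$. *)

(* Defs.v *)
From Stdlib Require Import Reals Lra Lia ZArith List.
From Coquelicot Require Import Coquelicot.
Open Scope R_scope.

Definition Cexp (z : C) : C :=
  (exp (Re z) * cos (Im z), exp (Re z) * sin (Im z)).

Definition Csin (z : C) : C :=
  Cdiv (Cminus (Cexp (Cmult Ci z)) (Cexp (Copp (Cmult Ci z)))) (Cmult (RtoC 2) Ci).

Definition LW_num (U Lam : R) (k : C) : C :=
  Cminus (Cminus (RtoC Lam) (Csin k)) (Cmult Ci (RtoC (U / 4))).
Definition LW_den (U Lam : R) (k : C) : C :=
  Cplus (Cminus (RtoC Lam) (Csin k)) (Cmult Ci (RtoC (U / 4))).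

(* One Lieb-Wu equation for k_j (denominator required to be nonzero so that
   the equation is meaningful). *)
Definition LW_k_eq (L : nat) (U Lam : R) (k : C) : Prop :=
  LW_den U Lam k <> RtoC 0 /\
  Cexp (Cmult Ci (Cmult k (RtoC (INR L)))) = Cdiv (LW_num U Lam k) (LW_den U Lam k).

Definition LW_solution (L : nat) (U : R) (k1 k2 : C) (Lam : R) : Prop :=
  LW_k_eq L U Lam k1 /\ LW_k_eq L U Lam k2 /\
  Cmult (Cdiv (LW_num U Lam k1) (LW_den U Lam k1))
        (Cdiv (LW_num U Lam k2) (LW_den U Lam k2)) = RtoC 1.

Definition two_string (L : nat) (U q xi Lam : R) : Prop :=
  0 <= q < 2 * PI /\ 0 < xi /\
  LW_solution L U (q, - xi) (q, xi) Lam.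

(* Main.v *)
Require Import Defs.
From Stdlib Require Import Reals Lra Lia ZArith List Arith ClassicalEpsilon.
From Coquelicot Require Import Coquelicot.
Open Scope R_scope.

Lemma pair_eq (a b c d : R) : (a, b) = (c, d) <-> a = c /\ b = d.
Proof. split; [intros H; inversion H; auto | intros [-> ->]; auto]. Qed.

Lemma Csin_pair q y : Csin (q, y) = (sin q * cosh y, cos q * sinh y).
Proof.
  unfold Csin, Cexp, Cdiv, Cminus, Cplus, Cmult, Copp, Cinv, Ci, RtoC; simpl.
  replace (0 * q - 1 * y) with (- y) by ring.
  replace (0 * y + 1 * q) with q by ring.
  replace (- (0 * q - 1 * y)) with y by ring.
  replace (- (0 * y + 1 * q)) with (- q) by ring.
  rewrite cos_neg, sin_neg. unfold cosh, sinh.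
  rewrite Ropp_involutive. replace ((2 * 0 - 0 * 1) * ((2 * 0 - 0 * 1) * 1) + (2 * 1 + 0 * 0) * ((2 * 1 + 0 * 0) * 1)) with 4 by ring. replace (2*0-0*1) with 0 by ring. replace (2*1+0*0) with 2 by ring. apply pair_eq; split; lra.
Qed.

Lemma Cexp_pair q y r :
  Cexp (Cmult Ci (Cmult (q, y) (RtoC r))) = (exp (- (y * r)) * cos (q * r), exp (- (y * r)) * sin (q * r)).
Proof.
  unfold Cexp, Cmult, Ci, RtoC; simpl.
  replace (0 * (q * r - y * 0) - 1 * (q * 0 + y * r)) with (- (y * r)) by ring.
  replace (0 * (q * 0 + y * r) + 1 * (q * r - y * 0)) with (q * r) by ring.
  reflexivity.
Qed.

Lemma Cdiv_eq (w a d : C) : d <> RtoC 0 -> (w = Cdiv a d <-> Cmult w d = a).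
Proof.
  intros Hd; split; intros H.
  - subst w. unfold Cdiv. rewrite <- Cmult_assoc, Cinv_l by exact Hd. apply Cmult_1_r.
  - subst a. unfold Cdiv. rewrite <- Cmult_assoc, Cinv_r by exact Hd. now rewrite Cmult_1_r.
Qed.

Lemma Cprod_eq (n1 d1 n2 d2 : C) : d1 <> RtoC 0 -> d2 <> RtoC 0 ->
  (Cmult (Cdiv n1 d1) (Cdiv n2 d2) = RtoC 1 <-> Cmult n1 n2 = Cmult d1 d2).
Proof.
  intros H1 H2.
  assert (E : Cmult (Cdiv n1 d1) (Cdiv n2 d2) = Cdiv (Cmult n1 n2) (Cmult d1 d2)).
  { field. split; assumption. }
  rewrite E. split; intros H.
  - symmetry in H. apply Cdiv_eq in H; [|now apply Cmult_neq_0]. rewrite Cmult_1_l in H. auto.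
  - symmetry. apply Cdiv_eq; [now apply Cmult_neq_0|]. rewrite Cmult_1_l. auto.
Qed.

Lemma cosh_neg' x : cosh (- x) = cosh x.
Proof. unfold cosh. rewrite Ropp_involutive. lra. Qed.
Lemma sinh_neg' x : sinh (- x) = - sinh x.
Proof. unfold sinh. rewrite Ropp_involutive. lra. Qed.

Lemma LW_den_pair U Lam q y : LW_den U Lam (q, y) = (Lam - sin q * cosh y, U / 4 - cos q * sinh y).
Proof. unfold LW_den. rewrite Csin_pair. unfold Cplus, Cminus, Cplus, Copp, Cmult, Ci, RtoC; simpl.
  apply pair_eq; split; ring. Qed.
Lemma LW_num_pair U Lam q y : LW_num U Lam (q, y) = (Lam - sin q * cosh y, - (U / 4) - cos q * sinh y).
Proof. unfold LW_num. rewrite Csin_pair. unfold Cplus, Cminus, Cplus, Copp, Cmult, Ci, RtoC; simpl.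
  apply pair_eq; split; ring. Qed.

Lemma nz_pair a b : (a, b) <> RtoC 0 <-> ~ (a = 0 /\ b = 0).
Proof. unfold RtoC. split; intros H C; apply H; [destruct C; subst; auto | apply pair_eq in C; auto]. Qed.

Definition RS (L : nat) (U q xi Lam : R) : Prop :=
  0 <= q < 2 * PI /\ 0 < xi /\ Lam = sin q * cosh xi /\ sin (q * INR L) = 0 /\
  cos q * sinh xi + U / 4 <> 0 /\ cos q * sinh xi - U / 4 <> 0 /\
  exp (xi * INR L) * cos (q * INR L) * (cos q * sinh xi + U / 4) = cos q * sinh xi - U / 4.

Lemma two_string_RS L U q xi Lam : 0 < U -> (two_string L U q xi Lam <-> RS L U q xi Lam).
Proof.
  intros HU. unfold two_string, LW_solution, LW_k_eq, RS.
  rewrite !LW_den_pair, !LW_num_pair, !Cexp_pair, !cosh_neg', !sinh_neg'.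
  rewrite <- !Ropp_mult_distr_r.
  set (X := Lam - sin q * cosh xi). set (b := cos q * sinh xi). set (u := U / 4).
  set (E := exp (- (- xi * INR L))). set (E' := exp (- (xi * INR L))).
  set (th := q * INR L).
  assert (EE : E * E' = 1).
  { unfold E, E'. rewrite <- exp_plus. replace (- (- xi * INR L) + - (xi * INR L)) with 0 by ring. apply exp_0. }
  assert (E1 : E = exp (xi * INR L)). { unfold E. f_equal. ring. }
  assert (Epos : 0 < E) by apply exp_pos.
  assert (E'pos : 0 < E') by apply exp_pos.
  split.
  - intros (Hq & Hxi & [D1 H1] & [D2 H2] & P).
    rewrite Cprod_eq in P by auto.
    rewrite Cdiv_eq in H1, H2 by auto.
    unfold Cmult in H1, H2, P; simpl in H1, H2, P.
    apply pair_eq in H1, H2, P. rewrite nz_pair in D1, D2.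
    destruct H1 as [H1a H1b]; destruct H2 as [H2a H2b]; destruct P as [Pa Pb].
    assert (HX : X = 0).
    { assert (X * U = 0) by (unfold u in *; nra). apply Rmult_integral in H. lra. }
    rewrite HX in *.
    assert (Hb1 : u - - b <> 0) by (intro; apply D1; split; auto).
    assert (Hb2 : u - b <> 0) by (intro; apply D2; split; auto).
    assert (Hs : sin th = 0).
    { assert (E * sin th * (u - - b) = 0) by lra.
      apply Rmult_integral in H; destruct H as [H|H]; [|lra].
      apply Rmult_integral in H; destruct H; lra. }
    rewrite <- E1.
    repeat split; try lra.
    unfold X in HX; lra.
  - intros (Hq & Hxi & HL & Hs & Hb1 & Hb2 & Heq).
    rewrite <- E1 in Heq.
    assert (HX : X = 0) by (unfold X; lra).
    assert (Hc : cos th * cos th = 1).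
    { pose proof (sin2_cos2 th). unfold Rsqr in H. rewrite Hs in H. lra. }
    rewrite HX.
    rewrite Cprod_eq, !Cdiv_eq by (apply nz_pair; lra).
    unfold Cmult; simpl. rewrite Hs.
    repeat split; try lra; try (apply nz_pair; lra); apply pair_eq; split; try lra.
    assert (H : E' * cos th * (b - u) = b + u).
    { rewrite <- Heq. replace (E' * cos th * (E * cos th * (b + u))) with ((E * E') * (cos th * cos th) * (b + u)) by ring.
      rewrite EE, Hc. ring. }
    replace (E' * cos th * (u - b)) with (- (E' * cos th * (b - u))) by ring. rewrite H. ring.
Qed.

Lemma expx_expmx x : exp x * exp (- x) = 1.
Proof. rewrite <- exp_plus. replace (x + - x) with 0 by ring. apply exp_0. Qed.

Lemma exp_gt1 x : 0 < x -> 1 < exp x.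
Proof. intros H. pose proof (exp_ineq1 x). lra. Qed.

Lemma cosh_gt1 x : 0 < x -> 1 < cosh x.
Proof.
  intros H. unfold cosh. pose proof (expx_expmx x). pose proof (exp_gt1 x H).
  pose proof (exp_pos (- x)). nra.
Qed.

Lemma cosh_ge1 x : 0 <= x -> 1 <= cosh x.
Proof.
  intros [H|H]. - left; now apply cosh_gt1. - subst. unfold cosh. rewrite Ropp_0, exp_0. lra.
Qed.

Lemma sinh_pos x : 0 < x -> 0 < sinh x.
Proof. intros H. rewrite <- sinh_0. now apply sinh_lt. Qed.

Lemma sinh_nonneg x : 0 <= x -> 0 <= sinh x.
Proof. intros [H|H]. - left; now apply sinh_pos. - subst; rewrite sinh_0; lra. Qed.

Lemma sinh_add x y : sinh (x + y) = sinh x * cosh y + cosh x * sinh y.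
Proof.
  unfold sinh, cosh. rewrite Ropp_plus_distr, !exp_plus. field.
Qed.

Lemma sinh_mult (n : nat) x : 0 <= x -> INR n * sinh x <= sinh (x * INR n).
Proof.
  intros Hx. induction n as [|n IH].
  - simpl. rewrite Rmult_0_r, sinh_0. lra.
  - rewrite S_INR. replace (x * (INR n + 1)) with (x * INR n + x) by ring.
    rewrite sinh_add.
    pose proof (cosh_ge1 x Hx). pose proof (sinh_nonneg x Hx).
    assert (0 <= x * INR n) by (apply Rmult_le_pos; [lra | apply pos_INR]).
    pose proof (cosh_ge1 _ H1). pose proof (sinh_nonneg _ H1).
    nra.
Qed.

Definition hfun (n x : R) := (exp x - exp (- x)) / 2 * (exp (x * n) + 1) / (exp (x * n) - 1).
Definition hder (n x : R) :=
  ((exp x + exp (- x)) / 2 * (exp (x * n) + 1) * (exp (x * n) - 1)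
   - 2 * n * exp (x * n) * ((exp x - exp (- x)) / 2)) / ((exp (x * n) - 1) * (exp (x * n) - 1)).

Lemma hfun_derive n x : exp (x * n) - 1 <> 0 -> is_derive (hfun n) x (hder n x).
Proof.
  intros H. unfold hfun, hder. auto_derive.
  - lra.
  - field. auto.
Qed.

Lemma hder_pos (L : nat) x : (1 <= L)%nat -> 0 < x -> 0 < hder (INR L) x.
Proof.
  intros HL Hx. unfold hder.
  set (E := exp (x * INR L)).
  assert (HLr : 1 <= INR L) by (apply (le_INR 1); lia).
  assert (HE : 1 < E) by (apply exp_gt1; nra).
  apply Rdiv_lt_0_compat; [|nra].
  pose proof (sinh_mult L x (Rlt_le _ _ Hx)) as Hs.
  unfold sinh in Hs at 2. fold E in Hs.
  assert (Hm : exp (- (x * INR L)) = / E) by (unfold E; apply exp_Ropp).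
  rewrite Hm in Hs.
  pose proof (cosh_gt1 x Hx) as Hc. pose proof (sinh_pos x Hx) as Hsp.
  unfold cosh, sinh in *.
  set (ch := (exp x + exp (- x)) / 2) in *.
  set (sh := (exp x - exp (- x)) / 2) in *.
  assert (K : (E + 1) * (E - 1) = 2 * E * ((E - / E) / 2)) by (field; lra).
  set (S := (E - / E) / 2) in *.
  assert (0 < S) by (assert (0 < INR L * sh) by nra; lra).
  assert (H2 : ch * (E + 1) * (E - 1) = ch * (2 * E * S)) by (rewrite <- K; ring).
  rewrite H2.
  replace (ch * (2 * E * S) - 2 * INR L * E * sh) with (2 * E * (ch * S - INR L * sh)) by ring.
  apply Rmult_lt_0_compat; [lra|].
  nra.
Qed.

Lemma hfun_incr (L : nat) x y : (1 <= L)%nat -> 0 < x -> x < y -> hfun (INR L) x < hfun (INR L) y.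
Proof.
  intros HL Hx Hxy.
  assert (HLr : 1 <= INR L) by (apply (le_INR 1); lia).
  destruct (MVT_cor2 (hfun (INR L)) (hder (INR L)) x y Hxy) as [c [Hc1 Hc2]].
  - intros c Hc. apply is_derive_Reals. apply hfun_derive.
    assert (1 < exp (c * INR L)) by (apply exp_gt1; nra). lra.
  - assert (0 < hder (INR L) c) by (apply hder_pos; auto; lra). nra.
Qed.

Lemma cont_of_derive (f : R -> R) : (forall x, ex_derive f x) -> continuity f.
Proof. intros H x. apply continuity_pt_filterlim. exact (@ex_derive_continuous R_AbsRing R_NormedModule f x (H x)). Qed.

Definition F1 n C u x := C * ((exp x - exp (- x)) / 2) * (exp (x * n) - 1) - u * (exp (x * n) + 1).
Definition F2 n C u x := u * (exp (x * n) - 1) - C * ((exp x - exp (- x)) / 2) * (exp (x * n) + 1).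

Lemma F1_cont n C u : continuity (F1 n C u).
Proof. apply cont_of_derive. intros x. unfold F1. auto_derive. auto. Qed.
Lemma F2_cont n C u : continuity (F2 n C u).
Proof. apply cont_of_derive. intros x. unfold F2. auto_derive. auto. Qed.

Lemma large_M C K : 0 < C -> 0 < K -> exists M, 0 < M /\ K < C * ((exp M - exp (- M)) / 2) /\ 1 + 2 * K / C < exp M.
Proof.
  intros HC HK.
  set (a := 1 + 2 * (2 * K / C)).
  assert (Ha : 1 < a) by (unfold a; assert (0 < K / C) by (apply Rdiv_lt_0_compat; lra); lra).
  exists (ln a).
  assert (HM : 0 < ln a) by (rewrite <- ln_1; apply ln_increasing; lra).
  rewrite exp_ln by lra.
  assert (exp (- ln a) < 1) by (rewrite <- exp_0; apply exp_increasing; lra).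
  pose proof (exp_pos (- ln a)).
  repeat split; auto.
  - set (e := exp (- ln a)) in *.
    assert (E : C * ((a - e) / 2) = C * (1 - e) / 2 + 2 * K) by (unfold a; field; lra).
    rewrite E. assert (0 < C * (1 - e)) by (apply Rmult_lt_0_compat; lra). lra.
  - unfold a. assert (0 < K / C) by (apply Rdiv_lt_0_compat; lra). lra.
Qed.

Lemma ex1 n C u : 0 < C -> 0 < u -> 1 <= n -> exists xi, 0 < xi /\ F1 n C u xi = 0.
Proof.
  intros HC Hu Hn.
  destruct (large_M C (2 * u + C)) as (M & HM & H1 & H2); try lra.
  assert (HE : exp M <= exp (M * n)).
  { destruct (Req_dec n 1) as [->|]. - rewrite Rmult_1_r; lra. - left; apply exp_increasing; nra. }
  assert (0 < 2 * u / C) by (apply Rdiv_lt_0_compat; lra).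
  assert (2 * (2 * u + C) / C = 2 * (2 * u / C) + 2) by (field; lra).
  destruct (IVT (F1 n C u) 0 M (F1_cont n C u) HM) as (z & Hz1 & Hz2).
  - unfold F1. rewrite Rmult_0_l, Ropp_0, exp_0. lra.
  - unfold F1. set (E := exp (M * n)) in *. set (s := (exp M - exp (- M)) / 2) in *.
    assert (3 < E) by lra. assert (2 * u < C * s) by lra.
    assert (2 * u * (E - 1) < C * s * (E - 1)) by (apply Rmult_lt_compat_r; lra).
    replace (C * s * (E - 1)) with (C * s * (E - 1)) by ring. nra.
  - exists z. split; auto. destruct Hz1 as [[Hz|Hz] _]; auto.
    subst z. unfold F1 in Hz2. rewrite Rmult_0_l, Ropp_0, exp_0 in Hz2. lra.
Qed.

Lemma F2_deriv0 n C u : is_derive (F2 n C u) 0 (u * n - 2 * C).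
Proof.
  unfold F2. auto_derive; auto. rewrite Rmult_0_l, Ropp_0, exp_0. lra.
Qed.

Lemma ex2 n C u : 0 < C <= 1 -> 0 < u -> 0 < n -> 2 < u * n -> exists xi, 0 < xi /\ F2 n C u xi = 0.
Proof.
  intros HC Hu Hn Hun.
  destruct (large_M C u) as (M & HM & H1 & H2); try lra.
  pose proof (F2_deriv0 n C u) as D. apply is_derive_Reals in D.
  destruct (D ((u * n - 2 * C) / 2)) as [d Hd]; [lra|].
  set (h := Rmin d M / 2).
  assert (Hh : 0 < h /\ h < d /\ h < M).
  { unfold h. pose proof (cond_pos d). pose proof (Rmin_l d M). pose proof (Rmin_r d M).
    assert (0 < Rmin d M) by (apply Rmin_pos; lra). lra. }
  assert (F0 : F2 n C u 0 = 0).
  { unfold F2. rewrite Rmult_0_l, Ropp_0, exp_0. lra. }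
  assert (Fh : 0 < F2 n C u h).
  { specialize (Hd h ltac:(lra) ltac:(rewrite Rabs_pos_eq; lra)).
    rewrite Rplus_0_l, F0, Rminus_0_r in Hd.
    apply Rabs_def2 in Hd. destruct Hd as [_ Hd].
    assert (0 < F2 n C u h / h) by lra.
    replace (F2 n C u h) with (F2 n C u h / h * h) by (field; lra). nra. }
  assert (FM : F2 n C u M < 0).
  { unfold F2. set (E := exp (M * n)). set (s := (exp M - exp (- M)) / 2) in *.
    assert (0 < E) by apply exp_pos. nra. }
  destruct (IVT (fun x => - F2 n C u x) h M) as (z & Hz1 & Hz2).
  - intros x. apply continuity_pt_opp. apply F2_cont.
  - lra.
  - lra.
  - lra.
  - exists z. split; [lra | lra].
Qed.

Lemma uniq1 n C u x y : 0 < C -> 0 < u -> 0 < n -> 0 < x -> x < y -> F1 n C u x = 0 -> F1 n C u y = 0 -> False.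
Proof.
  intros HC Hu Hn Hx Hxy Fx Fy. unfold F1 in *.
  pose proof (sinh_lt x y Hxy) as Hs. pose proof (sinh_pos x Hx). unfold sinh in *.
  set (sx := (exp x - exp (- x)) / 2) in *. set (sy := (exp y - exp (- y)) / 2) in *.
  assert (HE : exp (x * n) < exp (y * n)) by (apply exp_increasing; nra).
  assert (HEx : 1 < exp (x * n)) by (apply exp_gt1; nra).
  set (Ex := exp (x * n)) in *. set (Ey := exp (y * n)) in *.
  assert (A : (Ex - 1) * (Ey + 1) < (Ey - 1) * (Ex + 1)) by nra.
  assert (B : sx * ((Ex - 1) * (Ey + 1)) < sy * ((Ey - 1) * (Ex + 1))).
  { apply Rle_lt_trans with (sy * ((Ex - 1) * (Ey + 1))).
    - apply Rmult_le_compat_r; [nra | lra].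
    - apply Rmult_lt_compat_l; [lra | exact A]. }
  assert (Cx : (C * sx * (Ex - 1) - u * (Ex + 1)) * (Ey + 1) = 0) by (rewrite Fx; ring).
  assert (Cy : (C * sy * (Ey - 1) - u * (Ey + 1)) * (Ex + 1) = 0) by (rewrite Fy; ring).
  assert (D : C * (sy * ((Ey - 1) * (Ex + 1)) - sx * ((Ex - 1) * (Ey + 1))) = 0) by lra.
  assert (0 < C * (sy * ((Ey - 1) * (Ex + 1)) - sx * ((Ex - 1) * (Ey + 1)))) by (apply Rmult_lt_0_compat; lra).
  lra.
Qed.

Lemma F2_h (L : nat) C u x : 0 < x -> (1 <= L)%nat -> F2 (INR L) C u x = 0 -> C * hfun (INR L) x = u.
Proof.
  intros Hx HL F. unfold F2, hfun in *.
  assert (1 <= INR L) by (apply (le_INR 1); lia).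
  assert (1 < exp (x * INR L)) by (apply exp_gt1; nra).
  set (E := exp (x * INR L)) in *.
  field_simplify_eq; [nra | lra].
Qed.

Lemma uniq2 (L : nat) C u x y : 0 < C -> (1 <= L)%nat -> 0 < x -> x < y ->
  F2 (INR L) C u x = 0 -> F2 (INR L) C u y = 0 -> False.
Proof.
  intros HC HL Hx Hxy Fx Fy.
  apply F2_h in Fx; auto. apply F2_h in Fy; [|lra|auto].
  pose proof (hfun_incr L x y HL Hx Hxy). nra.
Qed.

Definition Pxi (L : nat) (U c sg xi : R) : Prop :=
  0 < xi /\ c * sinh xi + U / 4 <> 0 /\ c * sinh xi - U / 4 <> 0 /\
  exp (xi * INR L) * sg * (c * sinh xi + U / 4) = c * sinh xi - U / 4.

Lemma core (L : nat) U c sg : (1 <= L)%nat -> 0 < U -> 8 / U < INR L -> -1 <= c < 0 -> sg * sg = 1 ->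
  exists! xi, Pxi L U c sg xi.
Proof.
  intros HL HU HUL Hc Hsg.
  assert (Hn : 1 <= INR L) by (apply (le_INR 1); lia).
  assert (Hun : 2 < U / 4 * INR L).
  { assert (8 / U * U = 8) by (field; lra). nra. }
  set (u := U / 4) in *. assert (Hu : 0 < u) by (unfold u; lra).
  set (C := - c). assert (HC : 0 < C <= 1) by (unfold C; lra).
  replace c with (- C) by (unfold C; ring).
  unfold Pxi, sinh. fold u.
  assert (Hsg' : sg = 1 \/ sg = -1).
  { assert ((sg - 1) * (sg + 1) = 0) by lra. apply Rmult_integral in H. lra. }
  destruct Hsg' as [-> | ->].
  -
    assert (EQ : forall xi, 0 < xi -> (exp (xi * INR L) * 1 * (- C * ((exp xi - exp (- xi)) / 2) + u) =
                    - C * ((exp xi - exp (- xi)) / 2) - u <-> F1 (INR L) C u xi = 0)).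
    { intros xi _. unfold F1. split; intros; nra. }
    destruct (ex1 (INR L) C u) as (xi & Hxi & F); try lra.
    exists xi. split.
    + pose proof (sinh_pos xi Hxi) as Hs. unfold sinh in Hs.
      repeat split; auto.
      * intro H. unfold F1 in F. assert (C * ((exp xi - exp (- xi)) / 2) = u) by nra.
        rewrite H0 in F. lra.
      * nra.
      * apply EQ; auto.
    + intros y (Hy & _ & _ & Fy). apply EQ in Fy; auto.
      destruct (Rtotal_order xi y) as [H|[H|H]]; auto.
      * exfalso; apply (uniq1 (INR L) C u xi y); auto; lra.
      * exfalso; apply (uniq1 (INR L) C u y xi); auto; lra.
  -
    assert (EQ : forall xi, 0 < xi -> (exp (xi * INR L) * -1 * (- C * ((exp xi - exp (- xi)) / 2) + u) =
                    - C * ((exp xi - exp (- xi)) / 2) - u <-> F2 (INR L) C u xi = 0)).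
    { intros xi _. unfold F2. split; intros; nra. }
    destruct (ex2 (INR L) C u) as (xi & Hxi & F); try lra.
    exists xi. split.
    + pose proof (sinh_pos xi Hxi) as Hs. unfold sinh in Hs.
      repeat split; auto.
      * intro H. unfold F2 in F. assert (C * ((exp xi - exp (- xi)) / 2) = u) by nra.
        rewrite H0 in F. lra.
      * nra.
      * apply EQ; auto.
    + intros y (Hy & _ & _ & Fy). apply EQ in Fy; auto.
      destruct (Rtotal_order xi y) as [H|[H|H]]; auto.
      * exfalso; apply (uniq2 L C u xi y); auto; lra.
      * exfalso; apply (uniq2 L C u y xi); auto; lra.
Qed.

Lemma cos_neg_range q : 0 <= q < 2 * PI -> cos q < 0 -> PI / 2 < q < 3 * PI / 2.
Proof.
  intros Hq Hc. pose proof PI_RGT_0 as HPI. split.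
  - destruct (Rle_or_lt q (PI / 2)) as [H|H]; auto.
    pose proof (cos_ge_0 q ltac:(lra) H). lra.
  - destruct (Rlt_or_le q (3 * PI / 2)) as [H|H]; auto.
    assert (E : cos q = cos (q - 2 * PI)) by (rewrite cos_minus, cos_2PI, sin_2PI; ring).
    pose proof (cos_ge_0 (q - 2 * PI) ltac:(lra) ltac:(lra)). lra.
Qed.

Lemma part1 L U q xi Lam : (0 < L)%nat -> 0 < U -> two_string L U q xi Lam ->
  PI / 2 < q < 3 * PI / 2 /\ exists m : Z, q = IZR m * PI / INR L.
Proof.
  intros HL HU H. apply two_string_RS in H; auto.
  destruct H as (Hq & Hxi & HLam & Hs & Hb1 & Hb2 & Heq).
  assert (HLr : 0 < INR L) by (apply lt_0_INR; lia).
  split.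
  - apply cos_neg_range; auto.
    destruct (Rlt_or_le (cos q) 0) as [Hc|Hc]; auto. exfalso.
    set (th := q * INR L) in *.
    assert (Hc2 : cos th * cos th = 1).
    { pose proof (sin2_cos2 th). unfold Rsqr in H. rewrite Hs in H. lra. }
    assert (Hcc : cos th = 1 \/ cos th = -1).
    { assert ((cos th - 1) * (cos th + 1) = 0) by lra. apply Rmult_integral in H. lra. }
    assert (HE : 1 < exp (xi * INR L)) by (apply exp_gt1; nra).
    pose proof (sinh_pos xi Hxi).
    assert (0 <= cos q * sinh xi) by nra.
    set (b := cos q * sinh xi) in *. set (E := exp (xi * INR L)) in *.
    destruct Hcc as [Hcc|Hcc]; rewrite Hcc in Heq; nra.
  - destruct (sin_eq_0_0 _ Hs) as [k Hk]. exists k.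
    rewrite <- Hk. field. lra.
Qed.

Lemma part2 L U m : (0 < L)%nat -> 0 < U -> 8 / U < INR L ->
  PI / 2 < IZR m * PI / INR L < 3 * PI / 2 ->
  exists! p : R * R, two_string L U (IZR m * PI / INR L) (fst p) (snd p).
Proof.
  intros HL HU HUL Hr. set (q := IZR m * PI / INR L) in *.
  assert (HLr : 0 < INR L) by (apply lt_0_INR; lia).
  pose proof PI_RGT_0.
  assert (Hth : q * INR L = IZR m * PI) by (unfold q; field; lra).
  assert (Hs : sin (q * INR L) = 0) by (apply sin_eq_0_1; eauto).
  assert (Hc2 : cos (q * INR L) * cos (q * INR L) = 1).
  { pose proof (sin2_cos2 (q * INR L)). unfold Rsqr in H0. rewrite Hs in H0. lra. }
  assert (Hcq : cos q < 0) by (apply cos_lt_0; lra).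
  pose proof (COS_bound q).
  destruct (core L U (cos q) (cos (q * INR L)) ltac:(lia) HU HUL ltac:(lra) Hc2) as [xi [Pxi_ Uq]].
  exists (xi, sin q * cosh xi). split.
  - simpl. apply two_string_RS; auto. unfold RS. destruct Pxi_ as (A1 & A2 & A3 & A4).
    repeat split; auto; lra.
  - intros [xi' Lam'] H1. simpl in H1. apply two_string_RS in H1; auto.
    destruct H1 as (Hq & Hxi & HLam & _ & Hb1 & Hb2 & Heq).
    assert (xi = xi') by (apply Uq; unfold Pxi; auto).
    subst. reflexivity.
Qed.

Lemma range_nat (L n : nat) : (0 < L)%nat ->
  (PI / 2 < INR n * PI / INR L < 3 * PI / 2 <-> (L < 2 * n /\ 2 * n < 3 * L)%nat).
Proof.
  intros HL. assert (HLr : 0 < INR L) by (apply lt_0_INR; lia).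
  pose proof PI_RGT_0.
  assert (E : INR n * PI / INR L = (2 * INR n) / INR L * (PI / 2)) by (field; lra).
  rewrite E.
  assert (E2 : 2 * INR n = INR (2 * n)) by (rewrite mult_INR; simpl; ring).
  assert (E3 : 3 * INR L = INR (3 * L)) by (rewrite mult_INR; simpl; ring).
  rewrite E2.
  split.
  - intros [H1 H2]. split; apply INR_lt.
    + assert (1 < INR (2 * n) / INR L) by nra.
      apply (Rmult_lt_compat_r (INR L)) in H0; auto.
      unfold Rdiv in H0. rewrite Rmult_assoc, Rinv_l in H0; lra.
    + rewrite <- E3. assert (INR (2 * n) / INR L < 3) by nra.
      apply (Rmult_lt_compat_r (INR L)) in H0; auto.
      unfold Rdiv in H0. rewrite Rmult_assoc, Rinv_l in H0; lra.
  - intros [H1 H2]. apply lt_INR in H1, H2. rewrite <- E3 in H2.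
    assert (1 < INR (2 * n) / INR L).
    { apply (Rmult_lt_reg_r (INR L)); auto. unfold Rdiv. rewrite Rmult_assoc, Rinv_l; lra. }
    assert (INR (2 * n) / INR L < 3).
    { apply (Rmult_lt_reg_r (INR L)); auto. unfold Rdiv. rewrite Rmult_assoc, Rinv_l; lra. }
    split; nra.
Qed.

Lemma seq_range (L n : nat) :
  In n (seq (Nat.div2 L + 1) (if Nat.even L then (L - 1)%nat else L)) <-> (L < 2 * n /\ 2 * n < 3 * L)%nat.
Proof.
  rewrite in_seq.
  destruct (Nat.Even_or_Odd L) as [[k Hk]|[k Hk]]; subst.
  - rewrite Nat.div2_double, Nat.even_mul. simpl. lia.
  - replace (2 * k + 1)%nat with (S (2 * k)) by lia.
    rewrite Nat.div2_succ_double.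
    replace (Nat.even (S (2 * k))) with false.
    + lia.
    + replace (S (2 * k)) with (1 + 2 * k)%nat by lia. rewrite Nat.even_add_mul_2. reflexivity.
Qed.

Theorem mainTheorem3 (L : nat) (U : R) :
  (0 < L)%nat -> 0 < U -> 8 / U < INR L ->
  (forall q xi Lam : R, two_string L U q xi Lam ->
     PI / 2 < q < 3 * PI / 2 /\ exists m : Z, q = IZR m * PI / INR L) /\
  (forall m : Z, PI / 2 < IZR m * PI / INR L < 3 * PI / 2 ->
     exists! p : R * R, two_string L U (IZR m * PI / INR L) (fst p) (snd p)) /\
  (exists s : list (R * R * R),
     NoDup s /\
     (forall q xi Lam : R, In (q, xi, Lam) s <-> two_string L U q xi Lam) /\
     length s = (if Nat.even L then (L - 1)%nat else L)).
Proof.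
  intros HL HU HUL.
  assert (HLr : 0 < INR L) by (apply lt_0_INR; lia).
  pose proof PI_RGT_0.
  split. { intros q xi Lam H1. exact (part1 L U q xi Lam HL HU H1). }
  split. { intros m Hm. apply part2; auto. }
  set (g := fun n : nat => epsilon (inhabits (0, 0))
              (fun p : R * R => two_string L U (IZR (Z.of_nat n) * PI / INR L) (fst p) (snd p))).
  set (f := fun n : nat => (IZR (Z.of_nat n) * PI / INR L, fst (g n), snd (g n))).
  set (l := seq (Nat.div2 L + 1) (if Nat.even L then (L - 1)%nat else L)).
  assert (Hg : forall n, In n l -> two_string L U (IZR (Z.of_nat n) * PI / INR L) (fst (g n)) (snd (g n))).
  { intros n Hn. unfold g.
    apply (epsilon_spec (inhabits (0, 0)) (fun p : R * R => two_string L U (IZR (Z.of_nat n) * PI / INR L) (fst p) (snd p))).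
    destruct (part2 L U (Z.of_nat n) HL HU HUL) as [p [Hp _]].
    - rewrite <- INR_IZR_INZ. apply range_nat; auto. apply seq_range. exact Hn.
    - eauto. }
  exists (map f l). split; [|split].
  - apply NoDup_map_NoDup_ForallPairs; [| apply seq_NoDup].
    intros a b _ _ Hab. unfold f in Hab. injection Hab as H1 _ _.
    rewrite <- !INR_IZR_INZ in H1.
    apply INR_eq.
    replace (INR a) with (INR a * PI / INR L * (INR L / PI)) by (field; lra).
    rewrite H1. field; lra.
  - intros q xi Lam. rewrite in_map_iff. split.
    + intros [n [Hn Hin]]. unfold f in Hn. injection Hn as <- <- <-.
      apply Hg; auto.
    + intros H1. destruct (part1 L U q xi Lam HL HU H1) as [Hr [m Hm]].
      assert (Hm0 : (0 <= m)%Z).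
      { apply le_IZR. subst q. 
        assert (0 < IZR m * PI / INR L) by lra.
        assert (0 < IZR m * PI) by (replace (IZR m * PI) with (IZR m * PI / INR L * INR L) by (field; lra); nra).
        nra. }
      set (n := Z.to_nat m).
      assert (Hmn : m = Z.of_nat n) by (unfold n; rewrite Z2Nat.id; auto).
      rewrite Hmn in Hm.
      assert (Hnl : In n l).
      { apply seq_range. apply range_nat; auto. rewrite INR_IZR_INZ. rewrite <- Hm. auto. }
      exists n. split; auto. unfold f.
      subst q.
      destruct (part2 L U (Z.of_nat n) HL HU HUL) as [p [Hp Hu]].
      { exact Hr. }
      assert (E1 : p = (xi, Lam)) by (apply Hu; exact H1).
      assert (E2 : p = g n) by (apply Hu; apply Hg; auto).
      rewrite <- E2, E1. reflexivity.
  - rewrite length_map. unfold l. apply length_seq.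
Qed.
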